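(* Let $a\in A^\pm_{p|q}$ be homogeneous of degree $g\in\mathbb{Z}^n$ with respect to the $\mathbb{Z}^n$-grading. If $a^\ast a=0$, then $a=0$.
   Context: $\Bbbk$ is an algebraically closed field of characteristic $0$. Fix integers $p,q\ge 0$, put $n=p+q$, and fix a sign $\pm\in\{+,-\}$. Set $p(i)=0$ for $1\le i\le p$ and $p(i)=1$ for $p<i\le n$. The Clifford/Weyl superalgebra $A^\pm_{p|q}$ is the associative unital superalgebra over $\Bbbk$ generated by $x_i,\partial_i$ ($1\le i\le n$), where $x_i,\partial_i$ have parity $p(i)$, subject to the relations $[\partial_i,x_j]_\pm=\delta_{ij}$, $[x_i,x_j]_\pm=0$, $[\partial_i,\partial_j]_\pm=0$ for all $i,j$, where for homogeneous $a,b$ one sets $[a,b]_\pm=ab\pm(-1)^{p(a)p(b)}ba$. $A^\pm_{p|q}$ is $\mathbb{Z}^n$-graded by $\deg x_i=\mathbf{e}_i$, $\deg\partial_i=-\mathbf{e}_i$. The map $\ast$ is the unique $\Bbbk$-linear map $A^\pm_{p|q}\to A^\pm_{p|q}$ with $(ab)^\ast=b^\ast a^\ast$, $(a^\ast)^\ast=a$, $x_i^\ast=\partial_i$, $\partial_i^\ast=x_i$. *)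

(* Defs.v *)
From HB Require Import structures.
From mathcomp Require Import all_boot all_order all_algebra.
Unset Printing Implicit Defensive.
Import Order.TTheory GRing.Theory Num.Theory.
Local Open Scope ring_scope.

(* Indices 1..n of the paper are 'I_n = {0,..,n-1}; index i (0-based) has
   parity p(i) = 0 iff i < p. *)
Definition cw_par (p : nat) {n : nat} (i : 'I_n) : bool := (p <= i)%N.

(* [a,b]_sgn = a b + s (-1)^(pa pb) b a, where s = +1 if sgn = true ("+")
   and s = -1 if sgn = false ("-"). *)
Definition sbr {k : pzRingType} {A : algType k} (sgn : bool) (pa pb : bool)
  (a b : A) : A :=
  a * b + ((if sgn then 1 else -1) * (-1) ^+ (pa && pb)) * (b * a).

Definition cw_relations {k : pzRingType} {B : algType k} (p q : nat)
  (sgn : bool) (x d : 'I_(p + q) -> B) : Prop :=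
  [/\ forall i j : 'I_(p + q),
        sbr sgn (cw_par p i) (cw_par p j) (d i) (x j) = (i == j)%:R,
      forall i j : 'I_(p + q),
        sbr sgn (cw_par p i) (cw_par p j) (x i) (x j) = 0 &
      forall i j : 'I_(p + q),
        sbr sgn (cw_par p i) (cw_par p j) (d i) (d j) = 0].

Definition is_alg_hom {k : pzRingType} {A B : algType k} (f : A -> B) : Prop :=
  [/\ forall (c : k) (u v : A), f (c *: u + v) = c *: f u + f v,
      forall u v : A, f (u * v) = f u * f v &
      f 1 = 1].

(* A (with generators x, d) is the associative unital k-algebra presented by
   the generators x_i, d_i and the relations above: universal property. *)
Definition cw_presented {k : pzRingType} (p q : nat) (sgn : bool)
  (A : algType k) (x d : 'I_(p + q) -> A) : Prop :=
  cw_relations p q sgn x d /\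
  forall (B : algType k) (x' d' : 'I_(p + q) -> B),
    cw_relations p q sgn x' d' ->
    (exists f : A -> B, [/\ is_alg_hom f, forall i, f (x i) = x' i
                                        & forall i, f (d i) = d' i]) /\
    (forall f g : A -> B,
        is_alg_hom f -> (forall i, f (x i) = x' i) -> (forall i, f (d i) = d' i) ->
        is_alg_hom g -> (forall i, g (x i) = x' i) -> (forall i, g (d i) = d' i) ->
        forall a, f a = g a).

(* Words in the generators: a letter (true, i) is x_i, (false, i) is d_i. *)
Definition cw_letter {k : pzRingType} {A : algType k} {n : nat}
  (x d : 'I_n -> A) (l : bool * 'I_n) : A := if l.1 then x l.2 else d l.2.

Definition cw_word {k : pzRingType} {A : algType k} {n : nat}
  (x d : 'I_n -> A) (w : seq (bool * 'I_n)) : A :=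
  \prod_(l <- w) cw_letter x d l.

Definition cw_wdeg {n : nat} (w : seq (bool * 'I_n)) (j : 'I_n) : int :=
  \sum_(l <- w) (if l.2 == j then (if l.1 then 1 else -1) else 0).

Definition cw_homogeneous {k : pzRingType} {A : algType k} {n : nat}
  (x d : 'I_n -> A) (g : 'I_n -> int) (a : A) : Prop :=
  exists s : seq (k * seq (bool * 'I_n)),
    a = \sum_(t <- s) t.1 *: cw_word x d t.2 /\
    (forall t, t \in s -> forall j, cw_wdeg t.2 j = g j).

Definition cw_star {k : pzRingType} {A : algType k} {n : nat}
  (x d : 'I_n -> A) (st : A -> A) : Prop :=
  [/\ forall (c : k) (u v : A), st (c *: u + v) = c *: st u + st v,
      forall u v : A, st (u * v) = st v * st u,
      forall u : A, st (st u) = u,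
      forall i, st (x i) = d i &
      forall i, st (d i) = x i].

(* Main.v *)
Require Import Defs.
From HB Require Import structures.
From mathcomp Require Import all_boot all_order all_algebra.
From mathcomp Require Import boolp ring zify.
From Stdlib Require Import ProofIrrelevance.
Set Implicit Arguments.
Unset Strict Implicit.
Unset Printing Implicit Defensive.
Import GRing.Theory.
Local Open Scope ring_scope.

Section Endo.
Variables (k : fieldType) (n : nat).
Local Notation M := {ffun 'I_n -> nat}.
Definition fn := M -> k.
Definition islin (f : fn -> fn) := forall (c : k) (F G : fn),
  f (fun m => c * F m + G m) = fun m => c * f F m + f G m.
Record endo := Endo { ev :> fn -> fn ; ev_lin : islin ev }.

Lemma endo_eq (u v : endo) : ev u = ev v -> u = v.
Proof.
case: u v => [f fl] [g gl] /= E; subst g; congr Endo; apply: proof_irrelevance.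
Qed.

HB.instance Definition _ := gen_eqMixin endo.
HB.instance Definition _ := gen_choiceMixin endo.

Lemma lin0 (u : endo) : u (fun _ => 0) = fun _ => 0.
Proof.
have := ev_lin u 1 (fun _ => 0) (fun _ => 0).
have -> : (fun m : M => 1 * (fun _ : M => 0 : k) m + (fun _ => 0) m) = (fun _ => 0).
  by apply: funext => m; rewrite mul1r addr0.
move=> E; apply: funext => m.
have := congr1 (fun h => h m) E; rewrite /= mul1r => H.
by apply: (@addrI _ (u (fun _ => 0) m)); rewrite addr0 -H.
Qed.

Lemma linD (u : endo) F G : u (fun m => F m + G m) = fun m => u F m + u G m.
Proof.
have := ev_lin u 1 F G.
have -> : (fun m : M => 1 * F m + G m) = (fun m => F m + G m) by apply: funext => m; rewrite mul1r.
by move=> ->; apply: funext => m; rewrite mul1r.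
Qed.

Lemma linZ (u : endo) c F : u (fun m => c * F m) = fun m => c * u F m.
Proof.
have := ev_lin u c F (fun _ => 0).
have -> : (fun m : M => c * F m + (fun _ => 0) m) = (fun m => c * F m) by apply: funext => m; rewrite addr0.
by move=> ->; rewrite lin0; apply: funext => m; rewrite addr0.
Qed.

Lemma linN (u : endo) F : u (fun m => - F m) = fun m => - u F m.
Proof.
have -> : (fun m => - F m) = (fun m => (-1) * F m) by apply: funext => m; rewrite mulN1r.
by rewrite linZ; apply: funext => m; rewrite mulN1r.
Qed.

Definition e0 : endo. exists (fun _ _ => 0). by move=> c F G; apply: funext => m; rewrite mulr0 addr0. Defined.
Definition eopp (u : endo) : endo.
exists (fun F m => - u F m). move=> c F G; apply: funext => m; rewrite ev_lin opprD mulrN //. Defined.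
Definition eadd (u v : endo) : endo.
exists (fun F m => u F m + v F m). move=> c F G; apply: funext => m.
by rewrite !ev_lin mulrDr addrACA. Defined.
Definition e1 : endo. exists (fun F => F). by []. Defined.
Definition emul (u v : endo) : endo.
exists (fun F => u (v F)). by move=> c F G; rewrite !ev_lin. Defined.
Definition escale (c : k) (u : endo) : endo.
exists (fun F m => c * u F m). move=> a F G; apply: funext => m.
by rewrite ev_lin mulrDr !mulrA [c * a]mulrC. Defined.

Lemma eaddA : associative eadd.
Proof. by move=> u v w; apply: endo_eq; apply: funext => F; apply: funext => m /=; rewrite addrA. Qed.
Lemma eaddC : commutative eadd.
Proof. by move=> u v; apply: endo_eq; apply: funext => F; apply: funext => m /=; rewrite addrC. Qed.
Lemma eadd0 : left_id e0 eadd.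
Proof. by move=> u; apply: endo_eq; apply: funext => F; apply: funext => m /=; rewrite add0r. Qed.
Lemma eaddN : left_inverse e0 eopp eadd.
Proof. by move=> u; apply: endo_eq; apply: funext => F; apply: funext => m /=; rewrite addNr. Qed.

HB.instance Definition _ := GRing.isZmodule.Build endo eaddA eaddC eadd0 eaddN.

Let m0 : M := [ffun => 0%N].

Lemma emulA : associative emul.
Proof. by move=> u v w; apply: endo_eq. Qed.
Lemma emul1 : left_id e1 emul.
Proof. by move=> u; apply: endo_eq. Qed.
Lemma emulr1 : right_id e1 emul.
Proof. by move=> u; apply: endo_eq. Qed.
Lemma emulDl : left_distributive emul eadd.
Proof. by move=> u v w; apply: endo_eq. Qed.
Lemma emulDr : right_distributive emul eadd.
Proof. by move=> u v w; apply: endo_eq; apply: funext => F /=; rewrite linD. Qed.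
Lemma e1_neq0 : e1 != (e0 : endo).
Proof.
apply/eqP => /(congr1 (fun u : endo => ev u (fun _ => 1) m0)) /= /eqP.
by rewrite oner_eq0.
Qed.

HB.instance Definition _ := GRing.Zmodule_isNzRing.Build endo emulA emul1 emulr1 emulDl emulDr e1_neq0.

Lemma escaleA a b (v : endo) : escale a (escale b v) = escale (a * b) v.
Proof. by apply: endo_eq; apply: funext => F; apply: funext => m /=; rewrite mulrA. Qed.
Lemma escale1 : left_id 1 escale.
Proof. by move=> u; apply: endo_eq; apply: funext => F; apply: funext => m /=; rewrite mul1r. Qed.
Lemma escaleDr : right_distributive escale (@GRing.add endo).
Proof. by move=> a u v; apply: endo_eq; apply: funext => F; apply: funext => m /=; rewrite mulrDr. Qed.
Lemma escaleDl v : {morph escale^~ v: a b / a + b}.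
Proof. by move=> a b; apply: endo_eq; apply: funext => F; apply: funext => m /=; rewrite mulrDl. Qed.

HB.instance Definition _ := GRing.Zmodule_isLmodule.Build k endo escaleA escale1 escaleDr escaleDl.

Lemma escaleAl (a : k) (u v : endo) : a *: (u * v) = (a *: u) * v.
Proof. by apply: endo_eq. Qed.
HB.instance Definition _ := GRing.Lmodule_isLalgebra.Build k endo escaleAl.
Lemma escaleAr (a : k) (u v : endo) : a *: (u * v) = u * (a *: v).
Proof. by apply: endo_eq; apply: funext => F /=; rewrite linZ. Qed.
HB.instance Definition _ := GRing.Lalgebra_isAlgebra.Build k endo escaleAr.

Lemma evD (u v : endo) F m : (u + v) F m = u F m + v F m. Proof. by []. Qed.
Lemma evZ c (u : endo) F m : (c *: u) F m = c * u F m. Proof. by []. Qed.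
Lemma evM (u v : endo) F : (u * v) F = u (v F). Proof. by []. Qed.
Lemma ev1 F : (1 : endo) F = F. Proof. by []. Qed.
Lemma ev0 F m : (0 : endo) F m = 0. Proof. by []. Qed.
Lemma evN (u : endo) F m : (- u) F m = - u F m. Proof. by []. Qed.
End Endo.


Lemma sbrE (k : pzRingType) (A : algType k) sgn pa pb (a b : A) :
  sbr sgn pa pb a b = a * b + ((if sgn then 1 else -1) * (-1) ^+ (pa && pb) : k) *: (b * a).
Proof.
rewrite /sbr; case: sgn; case: (pa && pb);
by rewrite ?expr0 ?expr1 ?mul1r ?mulN1r ?opprK ?scale1r ?scaleN1r ?mulNr ?mul1r.
Qed.

Section Rep.
Variables (k : fieldType) (p q : nat) (sgn : bool).
Local Notation N := (p + q)%N.
Local Notation mon := ({ffun 'I_(p + q) -> nat} : Type).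
Local Notation E := (endo k N).

Definition spar (i j : 'I_N) : k :=
  (if sgn then 1 else -1) * (-1) ^+ (cw_par p i && cw_par p j).
Definition ee i j : k := - spar i j.
Definition weyl (i : 'I_N) : bool := sgn == cw_par p i.

Lemma spar2 i j : spar i j * spar i j = 1.
Proof. rewrite /spar; case: sgn; case: (_ && _); by rewrite ?expr0 ?expr1 ?mulN1r ?mul1r ?mulrNN ?mulr1 ?opprK. Qed.
Lemma ee2 i j : ee i j * ee i j = 1.
Proof. by rewrite /ee mulrNN spar2. Qed.
Lemma sparC i j : spar i j = spar j i.
Proof. by rewrite /spar andbC. Qed.
Lemma spar_ii i : spar i i = if weyl i then -1 else 1.
Proof. rewrite /spar /weyl andbb; case: sgn; case: (cw_par p i) => /=; by rewrite ?expr0 ?expr1 ?mulN1r ?mul1r ?opprK. Qed.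

Definition up (j : 'I_N) (m : mon) : mon := [ffun l => (m l + (l == j))%N].
Definition dn (j : 'I_N) (m : mon) : mon := [ffun l => (m l - (l == j))%N].

Lemma upE j (m : mon) l : up j m l = (m l + (l == j))%N. Proof. by rewrite ffunE. Qed.
Lemma dnE j (m : mon) l : dn j m l = (m l - (l == j))%N. Proof. by rewrite ffunE. Qed.
Lemma upK j (m : mon) : dn j (up j m) = m.
Proof. by apply/ffunP => l; rewrite dnE upE addnK. Qed.
Lemma dnK j (m : mon) : (0 < m j)%N -> up j (dn j m) = m.
Proof. move=> h; apply/ffunP => l; rewrite upE dnE; case: eqP => [->|_]; rewrite ?subn0 ?addn0 //. by rewrite subnK. Qed.
Lemma up_dn i j (m : mon) : i != j -> up i (dn j m) = dn j (up i m).
Proof. move=> ij; apply/ffunP => l; rewrite !(upE, dnE); case: (eqVneq l i) => [->|li]; first by rewrite (negPf ij) !subn0.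
by rewrite !addn0. Qed.
Lemma up_up i j (m : mon) : up i (up j m) = up j (up i m).
Proof. by apply/ffunP => l; rewrite !upE addnAC. Qed.
Lemma dn_dn i j (m : mon) : dn i (dn j m) = dn j (dn i m).
Proof. by apply/ffunP => l; rewrite !dnE subnAC. Qed.

Definition sig (i : 'I_N) (m : mon) : k := \prod_(j < N | (j < i)%N) ee i j ^+ m j.
Definition tt (i j : 'I_N) : k := if (j < i)%N then ee i j else 1.

Lemma sig_up i j (m : mon) : sig i (up j m) = sig i m * tt i j.
Proof.
rewrite /sig /tt.
under eq_bigr => l _ do rewrite upE exprD.
rewrite big_split /=; congr (_ * _).
case: ifP => ji.
  rewrite (bigD1 j) //= eqxx expr1 big1 ?mulr1 // => l /andP[_ /negPf ->]; by rewrite /= expr0.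
rewrite big1 // => l li; case: eqP => [El|_]; last by rewrite /= expr0.
by move: li; rewrite El ji.
Qed.

Lemma tt2 i j : tt i j * tt i j = 1.
Proof. by rewrite /tt; case: ifP; rewrite ?ee2 ?mulr1. Qed.

Lemma sig_dn i j (m : mon) : (0 < m j)%N -> sig i (dn j m) = sig i m * tt i j.
Proof.
move=> h; rewrite -{2}(dnK h) sig_up -mulrA tt2 mulr1 //.
Qed.

Lemma sig_ii i (m : mon) : sig i (up i m) = sig i m.
Proof. by rewrite sig_up /tt ltnn mulr1. Qed.

Lemma sig2 i (m : mon) : sig i m * sig i m = 1.
Proof.
rewrite /sig -big_split /=; apply: big1 => j _.
by rewrite -exprMn ee2 expr1n.
Qed.

Lemma tt_rel i j : i != j -> tt j i + spar i j * tt i j = 0.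
Proof.
move=> ij; rewrite /tt; case: (ltngtP i j) => h.
- by rewrite mulr1 /ee sparC addNr.
- by rewrite /ee mulrN spar2 subrr.
- by move/val_inj: h ij => ->; rewrite eqxx.
Qed.

Definition xf (i : 'I_N) (a : nat) : bool := if weyl i then (0 < a)%N else odd a.
Definition cf (i : 'I_N) (a : nat) : k := if weyl i then a%:R else (odd a)%:R.

Lemma xf_gt0 i a : xf i a -> (0 < a)%N.
Proof. by rewrite /xf; case: weyl => //; case: a. Qed.

Definition Xfun (i : 'I_N) (F : mon -> k) (m : mon) : k :=
  (xf i (m i))%:R * sig i m * F (dn i m).
Definition Dfun (i : 'I_N) (F : mon -> k) (m : mon) : k :=
  sig i m * cf i (m i).+1 * F (up i m).

Definition Xop (i : 'I_N) : E.
exists (Xfun i) => c F G; apply: funext => m; rewrite /Xfun /=; ring.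
Defined.
Definition Dop (i : 'I_N) : E.
exists (Dfun i) => c F G; apply: funext => m; rewrite /Dfun /=; ring.
Defined.

Lemma XopE i F m : Xop i F m = Xfun i F m. Proof. by []. Qed.
Lemma DopE i F m : Dop i F m = Dfun i F m. Proof. by []. Qed.

Lemma endoP (u v : E) : (forall F m, u F m = v F m) -> u = v.
Proof. move=> h; apply: endo_eq; apply: funext => F; apply: funext => m; exact: h. Qed.

Lemma evnat (b : bool) F m : (b%:R : E) F m = b%:R * F m.
Proof. by case: b; rewrite ?mul1r ?mul0r. Qed.

Lemma key_DX i a : cf i a.+1 * (xf i a.+1)%:R + spar i i * ((xf i a)%:R * cf i a) = 1.
Proof.
rewrite spar_ii /cf /xf; case: (weyl i) => /=.
  case: a => [|a] /=; ring.
by case: (odd a) => /=; ring.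
Qed.

Lemma key_XX i a : (1 + spar i i) * ((xf i a)%:R * (xf i a.-1)%:R) = 0.
Proof.
rewrite spar_ii /xf; case: (weyl i) => /=; first ring.
case: a => [|a] /=; first ring.
by case: (odd a) => /=; ring.
Qed.

Lemma key_DD i a : (1 + spar i i) * (cf i a.+1 * cf i a.+2) = 0.
Proof.
rewrite spar_ii /cf; case: (weyl i) => /=; first ring.
by case: (odd a) => /=; ring.
Qed.

Lemma rel_DX i j : sbr sgn (cw_par p i) (cw_par p j) (Dop i) (Xop j) = (i == j)%:R.
Proof.
apply: endoP => F m; rewrite sbrE evD evZ !evM evnat -/(spar i j) /= /Xfun /Dfun.
case: (eqVneq i j) => [<-|ij].
  rewrite upE eqxx addn1 upK sig_ii mul1r.
  have K := key_DX i (m i).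
  case: (boolP (xf i (m i))) => hx.
    have h0 := xf_gt0 hx.
    rewrite sig_dn // /tt ltnn mulr1 dnE eqxx subn1 prednK // dnK //.
    rewrite hx in K.
    transitivity (sig i m * sig i m * (cf i (m i).+1 * (xf i (m i).+1)%:R + spar i i * (true%:R * cf i (m i))) * F m); first ring.
    by rewrite sig2 K !mul1r.
  rewrite (negPf hx) in K *.
  have Z : (false%:R : k) = 0 by [].
  rewrite Z !mul0r mulr0 addr0 in K *.
  transitivity (sig i m * sig i m * (cf i (m i).+1 * (xf i (m i).+1)%:R) * F m); first ring.
  by rewrite sig2 K !mul1r.
have Z : (false%:R : k) = 0 by [].
rewrite Z mul0r upE dnE ?(eq_sym j i) ?(negPf ij) addn0 subn0 up_dn //.
case: (boolP (xf j (m j))) => hx; last by rewrite Z; ring.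
have h0 := xf_gt0 hx.
rewrite sig_up sig_dn //.
have Z1 : (true%:R : k) = 1 by [].
rewrite Z1.
have T := tt_rel ij.
transitivity (sig i m * sig j m * cf i (m i).+1 * F (dn j (up i m)) * (tt j i + spar i j * tt i j)); first ring.
by rewrite T mulr0.
Qed.

Lemma rel_XX i j : sbr sgn (cw_par p i) (cw_par p j) (Xop i) (Xop j) = 0.
Proof.
apply: endoP => F m; rewrite sbrE evD evZ !evM ev0 -/(spar i j) /= /Xfun.
case: (eqVneq i j) => [<-|ij].
  have Z : (false%:R : k) = 0 by [].
  case: (boolP (xf i (m i))) => hx; last by rewrite Z; ring.
  have h0 := xf_gt0 hx.
  rewrite sig_dn // /tt ltnn mulr1 dnE eqxx subn1.
  have K := key_XX i (m i).
  rewrite hx in K.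
  transitivity (sig i m * sig i m * F (dn i (dn i m)) * ((1 + spar i i) * (true%:R * (xf i (m i).-1)%:R))); first ring.
  by rewrite K mulr0.
rewrite !dnE (negPf ij) eq_sym (negPf ij) !subn0 dn_dn.
have Z : (false%:R : k) = 0 by [].
case: (boolP (xf j (m j))) => hj; last by rewrite Z; ring.
case: (boolP (xf i (m i))) => hi; last by rewrite Z; ring.
rewrite sig_dn ?(xf_gt0 hi) // sig_dn ?(xf_gt0 hj) //.
have Z1 : (true%:R : k) = 1 by [].
rewrite Z1.
have T := tt_rel ij.
transitivity (sig i m * sig j m * F (dn i (dn j m)) * (tt j i + spar i j * tt i j)); first ring.
by rewrite T mulr0.
Qed.

Lemma rel_DD i j : sbr sgn (cw_par p i) (cw_par p j) (Dop i) (Dop j) = 0.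
Proof.
apply: endoP => F m; rewrite sbrE evD evZ !evM ev0 -/(spar i j) /= /Dfun.
case: (eqVneq i j) => [<-|ij].
  rewrite sig_ii upE eqxx addn1.
  have K := key_DD i (m i).
  transitivity (sig i m * sig i m * F (up i (up i m)) * ((1 + spar i i) * (cf i (m i).+1 * cf i (m i).+2))); first ring.
  by rewrite K mulr0.
rewrite !upE (negPf ij) eq_sym (negPf ij) !addn0 up_up sig_up sig_up.
have T := tt_rel ij.
transitivity (sig i m * sig j m * cf i (m i).+1 * cf j (m j).+1 * F (up i (up j m)) * (tt j i + spar i j * tt i j)); first ring.
by rewrite T mulr0.
Qed.

Lemma Rrel : cw_relations p q sgn Xop Dop.
Proof. split; [exact: rel_DX | exact: rel_XX | exact: rel_DD]. Qed.


Local Notation L := (bool * 'I_N)%type.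

Definition dl (g : mon) : mon -> k := fun m => (m == g)%:R.
Definition lam (l : L) (g : mon) : k :=
  if l.1 then (xf l.2 (g l.2).+1)%:R * sig l.2 g else sig l.2 g * cf l.2 (g l.2).
Definition tau (l : L) (g : mon) : mon := if l.1 then up l.2 g else dn l.2 g.
Fixpoint tauw (w : seq L) (g : mon) : mon :=
  if w is l :: w' then tau l (tauw w' g) else g.
Fixpoint lamw (w : seq L) (g : mon) : k :=
  if w is l :: w' then lamw w' g * lam l (tauw w' g) else 1.

Lemma nat0 : (false%:R : k) = 0. Proof. by []. Qed.
Lemma nat1 : (true%:R : k) = 1. Proof. by []. Qed.

Lemma cf0 i : cf i 0 = 0.
Proof. by rewrite /cf; case: weyl. Qed.

Lemma letter_act l g : cw_letter Xop Dop l (dl g) = fun m => lam l g * dl (tau l g) m.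
Proof.
apply: funext => m; case: l => [[] i]; rewrite /cw_letter /= /lam /tau /dl /=.
  rewrite /Xfun; case: (eqVneq m (up i g)) => [->|mg].
    by rewrite upE eqxx addn1 upK eqxx sig_ii.
  rewrite mulr0; case: (eqVneq (dn i m) g) => [eg|]; last by rewrite mulr0.
  case: (posnP (m i)) => [m0|mp]; last by move: mg; rewrite -eg dnK // eqxx.
  by rewrite m0 /xf; case: (weyl i); rewrite /= !mul0r.
rewrite /Dfun; case: (eqVneq m (dn i g)) => [->|mg].
  case: (posnP (g i)) => [g0|gp].
    rewrite g0 cf0 mulr0 mul0r; case: eqP => [E|_]; last by rewrite mulr0.
    by exfalso; have := congr1 (fun h : mon => h i) E; rewrite upE dnE eqxx g0.
  by rewrite (dnK gp) eqxx sig_dn // /tt ltnn mulr1 dnE eqxx subn1 prednK.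
rewrite mulr0; case: eqP => [E|]; last by rewrite mulr0.
by move: mg; rewrite -E upK eqxx.
Qed.

Lemma wordE_endo (l : L) w : cw_word Xop Dop (l :: w) = cw_letter Xop Dop l * cw_word Xop Dop w.
Proof. by rewrite /cw_word big_cons. Qed.

Lemma word_act w g : cw_word Xop Dop w (dl g) = fun m => lamw w g * dl (tauw w g) m.
Proof.
elim: w => [|l w IH].
  by rewrite /cw_word big_nil ev1; apply: funext => m /=; rewrite mul1r.
rewrite wordE_endo evM IH linZ letter_act; apply: funext => m /=; by rewrite mulrA.
Qed.

Lemma wdeg_cons (l : L) (w : seq L) (j : 'I_N) : cw_wdeg (l :: w) j =
  (if l.2 == j then (if l.1 then 1 else -1) else 0) + cw_wdeg w j.
Proof. by rewrite /cw_wdeg big_cons. Qed.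

Lemma wdeg_count (w : seq L) (j : 'I_N) : cw_wdeg w j = (count_mem (true, j) w)%:Z - (count_mem (false, j) w)%:Z.
Proof.
elim: w => [|l w IH]; first by rewrite /cw_wdeg big_nil.
rewrite wdeg_cons IH; case: l => [[] i] /=; rewrite !xpair_eqE /=;
  case: (i == j) => /=; rewrite ?add0n ?PoszD; ring.
Qed.

Lemma deg_lem w g : lamw w g != 0 -> forall j, (tauw w g j)%:Z = (g j)%:Z + cw_wdeg w j.
Proof.
elim: w => [|l w IH] /=; first by move=> _ j; rewrite /cw_wdeg big_nil addr0.
rewrite mulf_eq0 negb_or => /andP[h1 h2] j; rewrite wdeg_cons addrCA -IH //.
case: l h2 => [[] i]; rewrite /lam /tau /=.
  move=> _; rewrite upE (eq_sym i j); case: (j == i) => /=; last by rewrite addn0 add0r.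
  by rewrite PoszD addrC.
set z := tauw w g => h2; rewrite dnE eq_sym; case: (eqVneq i j) => [<-|_]; last by rewrite subn0 add0r.
have zp : (0 < z i)%N by move: h2; case: posnP => // ->; rewrite cf0 mulr0 eqxx.
by rewrite /= -subzn // addrC.
Qed.

Definition W (g : mon) : k := \prod_(i < N | weyl i) ((g i)`!)%:R.

Lemma W_up i g : W (up i g) = W g * (if weyl i then (g i).+1%:R else 1).
Proof.
rewrite /W; case: (boolP (weyl i)) => wi.
  rewrite (bigD1 i) //= [in RHS](bigD1 i) //=.
  rewrite (eq_bigr (fun j => ((g j)`!)%:R)); last first.
    by move=> j /andP[_ ji]; rewrite upE (negPf ji) addn0.
  rewrite upE eqxx addn1 factS natrM; ring.
rewrite mulr1; apply: eq_bigr => j wj; rewrite upE; case: eqP => [E|]; last by rewrite addn0.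
by move: wi; rewrite -E wj.
Qed.

Definition Ew (w : seq L) (g h : mon) : k := lamw w g * (tauw w g == h)%:R.
Definition starL (l : L) : L := (~~ l.1, l.2).
Definition star (w : seq L) : seq L := rev (map starL w).

Lemma adjX i g h :
  lam (true, i) g * (tau (true, i) g == h)%:R * W h =
  lam (false, i) h * (tau (false, i) h == g)%:R * W g.
Proof.
rewrite /lam /tau /=; case: (eqVneq h (up i g)) => [->|hg].
  rewrite upK eqxx sig_ii W_up upE eqxx addn1 /xf /cf; case: (weyl i) => /=; ring.
rewrite nat0 mulr0 mul0r; case: (eqVneq (dn i h) g) => [eg|]; last by rewrite nat0 mulr0 mul0r.
case: (posnP (h i)) => [h0|hp]; first by rewrite h0 cf0 mulr0 !mul0r.
by move: hg; rewrite -eg dnK // eqxx.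
Qed.

Lemma adjL l g h :
  lam l g * (tau l g == h)%:R * W h = lam (starL l) h * (tau (starL l) h == g)%:R * W g.
Proof. by case: l => [[] i]; [apply: adjX | rewrite /starL /=; symmetry; apply: adjX]. Qed.

Lemma tauw_cat u v g : tauw (u ++ v) g = tauw u (tauw v g).
Proof. by elim: u => //= l u ->. Qed.
Lemma lamw_cat u v g : lamw (u ++ v) g = lamw v g * lamw u (tauw v g).
Proof. elim: u => [|l u IH] /=; first by rewrite mulr1. by rewrite IH tauw_cat mulrA. Qed.

Lemma adjW w g h : Ew w g h * W h = Ew (star w) h g * W g.
Proof.
elim: w h => [|l w IH] h.
  rewrite /Ew /star /= !mul1r eq_sym; case: eqP => [->|_] //.
  by rewrite nat0 !mul0r.
rewrite /star /= rev_cons -cats1 -/(star w) /Ew lamw_cat tauw_cat /= mul1r.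
set z := tauw w g; set th := tau (starL l) h.
have E1 : lamw w g * lam l z * (tau l z == h)%:R * W h = lamw w g * (lam (starL l) h * (th == z)%:R * W z).
  by rewrite -adjL; ring.
have := IH th; rewrite /Ew -/z => E2.
transitivity (lam (starL l) h * (lamw (star w) th * (tauw (star w) th == g)%:R * W g)); last by ring.
rewrite E1 -E2; case: (eqVneq th z) => [->|ne].
  by rewrite ?eqxx ?nat1; ring.
by rewrite ?(eq_sym z th) ?(negPf ne) ?nat0; ring.
Qed.

Definition key (l : L) : nat := if l.1 then val l.2 else (N + val l.2)%N.
Definition leL (l1 l2 : L) : bool := (key l1 <= key l2)%N.

Lemma key_inj : injective key.
Proof.
move=> [[] i] [[] j]; rewrite /key /= => h.
- by move/val_inj: h => ->.
- by have := ltn_ord i; rewrite h -ltn_subRL subnn.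
- by have := ltn_ord j; rewrite -h -ltn_subRL subnn.
- by move/addnI/val_inj: h => ->.
Qed.
Lemma leL_tr : transitive leL.
Proof. move=> a b c; exact: leq_trans. Qed.
Lemma leL_anti : antisymmetric leL.
Proof. by move=> a b /andP[h1 h2]; apply: key_inj; apply/eqP; rewrite eqn_leq; apply/andP. Qed.

Definition adm (u : seq L) : bool := all (fun l => weyl l.2 || (count_mem l u <= 1)%N) u.
Definition Good (u : seq L) : bool := sorted leL u && adm u.

Variables (A : algType k) (x d : 'I_N -> A).
Hypothesis hrel : cw_relations p q sgn x d.
Hypothesis char0 : [pchar k] =i pred0.

Local Notation word := (cw_word x d).
Local Notation letter := (cw_letter x d).

Lemma word_cons l w : word (l :: w) = letter l * word w.
Proof. by rewrite /cw_word big_cons. Qed.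
Lemma word_nil : word [::] = 1.
Proof. by rewrite /cw_word big_nil. Qed.
Lemma word_cat u v : word (u ++ v) = word u * word v.
Proof. by rewrite /cw_word big_cat. Qed.

Definition inspan (P : seq L -> Prop) (a : A) :=
  exists s : seq (k * seq L), a = \sum_(t <- s) t.1 *: word t.2 /\ (forall t, t \in s -> P t.2).

Lemma inspan0 P : inspan P 0.
Proof. by exists [::]; rewrite big_nil. Qed.
Lemma inspan_word P w : P w -> inspan P (word w).
Proof. move=> h; exists [:: (1, w)]; rewrite big_seq1 scale1r; split=> // t; rewrite inE => /eqP -> //. Qed.
Lemma inspan_add P a b : inspan P a -> inspan P b -> inspan P (a + b).
Proof.
move=> [s1 [-> h1]] [s2 [-> h2]]; exists (s1 ++ s2); rewrite big_cat; split=> // t.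
by rewrite mem_cat => /orP[]; [apply: h1|apply: h2].
Qed.
Lemma inspan_scale P c a : inspan P a -> inspan P (c *: a).
Proof.
move=> [s [-> h]]; exists [seq (c * t.1, t.2) | t <- s]; split.
  by rewrite big_map scaler_sumr; apply: eq_bigr => t _; rewrite scalerA.
move=> t /mapP [t0 t0s E]; rewrite E; exact: (h _ t0s).
Qed.
Lemma inspan_mono (P Q : seq L -> Prop) a : (forall u, P u -> Q u) -> inspan P a -> inspan Q a.
Proof. by move=> PQ [s [-> h]]; exists s; split=> // t ts; apply: PQ; apply: h. Qed.
Lemma inspan_sum P (s : seq (k * seq L)) (G : seq L -> A) :
  (forall t, t \in s -> inspan P (G t.2)) -> inspan P (\sum_(t <- s) t.1 *: G t.2).
Proof.
elim: s => [|t s IH] h; first by rewrite big_nil; apply: inspan0.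
rewrite big_cons; apply: inspan_add; first by apply: inspan_scale; apply: h; rewrite inE eqxx.
by apply: IH => t' t's; apply: h; rewrite inE t's orbT.
Qed.

Lemma inspan_lmul P Q (G : seq L -> A) a :
  inspan P a -> (forall u, P u -> inspan Q (G u)) ->
  (forall (c : k) u, G u = G u) -> True.
Proof. by []. Qed.

Definition delta (l1 l2 : L) : bool := [&& ~~ l1.1, l2.1 & l1.2 == l2.2].

Lemma swap l1 l2 : (key l2 < key l1)%N ->
  letter l1 * letter l2 = (- spar l1.2 l2.2) *: (letter l2 * letter l1) + (delta l1 l2)%:R.
Proof.
case: hrel => hDX hXX hDD.
case: l1 l2 => [[] i] [[] j]; rewrite /key /delta /cw_letter /= => h.
- have := hXX i j; rewrite sbrE -/(spar i j) => /eqP; rewrite addr_eq0 => /eqP ->.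
  by rewrite scaleNr addr0.
- by exfalso; move: h; rewrite ltnNge; have := ltn_ord i; move/ltnW/leq_trans; move/(_ _ (leq_addr j N)) => ->.
- have := hDX i j; rewrite sbrE -/(spar i j) => E.
  by rewrite scaleNr -E addrC addrK.
- have := hDD i j; rewrite sbrE -/(spar i j) => /eqP; rewrite addr_eq0 => /eqP ->.
  by rewrite scaleNr addr0.
Qed.

Lemma two_neq0 : (2%:R : k) != 0.
Proof. by move/pcharf0P: char0 => ->. Qed.

Lemma sq0 l : ~~ weyl l.2 -> letter l * letter l = 0.
Proof.
case: hrel => hDX hXX hDD hw.
have E : forall i, ~~ weyl i -> forall u : A, u + spar i i *: u = 0 -> u = 0.
  move=> i wi u; rewrite spar_ii (negPf wi) scale1r => /eqP.
  rewrite -mulr2n -scaler_nat scaler_eq0 (negPf two_neq0) /= => /eqP //.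
case: l hw => [[] i] /= hw; apply: (E i hw).
- by have := hXX i i; rewrite sbrE.
- by have := hDD i i; rewrite sbrE.
Qed.

Lemma count_cons_mem (z y : L) v : count_mem z (y :: v) = ((y == z) + count_mem z v)%N.
Proof. by []. Qed.

Lemma Good_tail y v : Good (y :: v) -> Good v.
Proof.
case/andP => sv av; apply/andP; split; first exact: path_sorted sv.
apply/allP => z zv; have := allP av z; rewrite inE zv orbT => /(_ isT) /orP[-> //|h].
by apply/orP; right; apply: leq_trans h; rewrite count_cons_mem leq_addl.
Qed.

Lemma ins v : Good v -> forall l, inspan (fun u => Good u /\ {subset u <= l :: v}) (word (l :: v)).
Proof.
elim: v => [|y v IH] Gv l.
  apply: inspan_word; split; last by [].
  by rewrite /Good /adm /= eqxx orbT.
have Gv' := Good_tail Gv.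
case/andP: (Gv) => syv ayv.
have ally : all (leL y) v := order_path_min leL_tr syv.
case: (leqP (key l) (key y)) => hly.
  case: (boolP ((l == y) && ~~ weyl l.2)) => [/andP[/eqP ely wl] | hnot].
    by rewrite !word_cons mulrA -ely sq0 // mul0r; apply: inspan0.
  apply: inspan_word; split; last by [].
  apply/andP; split; first by rewrite /= /leL hly.
  apply/allP => z zin; case: (eqVneq z l) => [->|zl].
    case: (boolP (weyl l.2)) => //= wl.
    have ly : l != y by move: hnot; rewrite wl andbT.
    have lv : l \notin v.
      apply/negP => lv; have := allP ally l lv; rewrite /leL => h.
      have ely : l = y by apply: leL_anti; rewrite /leL hly h.
      by move: ly; rewrite ely eqxx.
    by rewrite eqxx eq_sym (negPf ly) (count_memPn lv).
  have zyv : z \in y :: v by move: zin; rewrite inE (negPf zl).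
  have := allP ayv z zyv; case/orP=> [-> //|h]; apply/orP; right.
  by rewrite /= eq_sym (negPf zl).
rewrite !word_cons mulrA swap // mulrDl -scalerAl -mulrA -word_cons.
apply: inspan_add.
  apply: inspan_scale; have [s [Es Hs]] := IH Gv' l.
  rewrite Es mulr_sumr.
  under eq_bigr => t _ do rewrite -scalerAr -word_cons.
  apply: (@inspan_sum _ s (fun u => word (y :: u))) => t ts.
  apply: inspan_word; have [Gu su] := Hs t ts; split.
    apply/andP; split.
      rewrite /= (path_sortedE leL_tr); apply/andP; split; last by case/andP: Gu.
      apply/allP => z zu; have := su z zu; rewrite inE => /orP[/eqP ->|zv].
        by rewrite /leL ltnW.
      exact: allP ally z zv.
    apply/allP => z zin; case: (eqVneq z y) => [->|zy].
      case: (boolP (weyl y.2)) => //= wy.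
      have yu : y \notin t.2.
        apply/negP => yu; have := su y yu; rewrite inE => /orP[/eqP yl|yv].
          by move: hly; rewrite -yl ltnn.
        have := allP ayv y; rewrite inE eqxx => /(_ isT); rewrite (negPf wy) /=.
        by rewrite eqxx add1n ltnS leqn0 => /eqP /count_memPn; rewrite yv.
      by rewrite /= eqxx (count_memPn yu).
    have zu : z \in t.2 by move: zin; rewrite inE (negPf zy).
    case/andP: Gu => _ au; have := allP au z zu; case/orP=> [-> //|h]; apply/orP; right.
    by rewrite /= eq_sym (negPf zy).
  move=> z; rewrite inE => /orP[/eqP ->|zu]; first by rewrite !inE eqxx orbT.
  have := su z zu; rewrite !inE => /orP[-> //|->]; by rewrite !orbT.
case: (delta l y) => /=; last by rewrite mulr0n mul0r; apply: inspan0.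
rewrite mulr1n mul1r; apply: inspan_word; split=> // z zv.
by rewrite !inE zv !orbT.
Qed.

Lemma span w : inspan Good (word w).
Proof.
elim: w => [|l w [s [Es Hs]]].
  by rewrite word_nil -word_nil; apply: inspan_word.
rewrite word_cons Es mulr_sumr.
under eq_bigr => t _ do rewrite -scalerAr -word_cons.
apply: (@inspan_sum _ s (fun u => word (l :: u))) => t ts.
by apply: inspan_mono (ins (Hs t ts) l) => u [].
Qed.

Lemma sig_neq0 i g : sig i g != 0.
Proof. by apply/eqP => h; have := sig2 i g; rewrite h mul0r => /eqP; rewrite eq_sym oner_eq0. Qed.

Lemma natr_neq0 m : (0 < m)%N -> (m%:R : k) != 0.
Proof. by move/pcharf0P: char0 => ->; rewrite -lt0n. Qed.

Lemma sorted_split (t : seq L) : sorted leL t ->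
  t = [seq l <- t | l.1] ++ [seq l <- t | ~~ l.1].
Proof.
elim: t => [|l t IH] //= st.
have st' := path_sorted st.
case: (boolP l.1) => hl /=; first by rewrite -IH.
have alld : all (fun z : L => ~~ z.1) t.
  apply/allP => z zt; have := allP (order_path_min leL_tr st) z zt.
  rewrite /leL /key (negPf hl); case: (z.1) => //=.
  by move=> h; have := ltn_ord z.2; rewrite ltnNge (leq_trans (leq_addr _ _) h).
rewrite (all_filterP alld).
have -> : [seq l0 <- t | l0.1] = [::].
  by apply/eqP; rewrite -[_ == _]negbK -has_filter -all_predC.
by [].
Qed.

Lemma count_fd (t : seq L) j : count_mem (false, j) [seq l <- t | ~~ l.1] = count_mem (false, j) t.
Proof. rewrite count_filter; apply: eq_count => z /=; case: eqP => [->|] //=. Qed.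
Lemma count_fx (t : seq L) j : count_mem (true, j) [seq l <- t | l.1] = count_mem (true, j) t.
Proof. rewrite count_filter; apply: eq_count => z /=; case: eqP => [->|] //=; by rewrite andbF. Qed.
Lemma count_fd0 (t : seq L) j : count_mem (true, j) [seq l <- t | ~~ l.1] = 0%N.
Proof. by rewrite count_filter (@eq_count _ _ pred0) ?count_pred0 // => z /=; case: eqP => [->|] //=. Qed.
Lemma count_fx0 (t : seq L) j : count_mem (false, j) [seq l <- t | l.1] = 0%N.
Proof. by rewrite count_filter (@eq_count _ _ pred0) ?count_pred0 // => z /=; case: eqP => [->|] //=. Qed.

Lemma Dlem (v : seq L) : all (fun l => ~~ l.1) v -> forall g : mon,
  (forall i, count_mem (false, i) v <= g i)%N -> (forall i, ~~ weyl i -> g i <= 1)%N ->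
  lamw v g != 0.
Proof.
elim: v => [|l v IH] /=; first by move=> *; rewrite oner_eq0.
case: l => [[] i] /andP[hb av] g hc hw; first by move: hb.
have hc' : forall j, (count_mem (false, j) v <= g j)%N.
  by move=> j; apply: leq_trans (hc j); rewrite /= leq_addl.
have nz := IH av g hc' hw.
rewrite mulf_neq0 // /lam /= mulf_neq0 ?sig_neq0 //.
have := deg_lem nz i; rewrite wdeg_count.
have -> : count_mem (true, i) v = 0%N.
  by apply/count_memPn; apply/negP => /(allP av).
have := hc i; rewrite /= eqxx add1n => hci.
move=> hz.
have hz' : (tauw v g i + count_mem (false, i) v = g i)%N.
  apply/eqP; rewrite -eqz_nat PoszD hz; apply/eqP; ring.
have zp : (0 < tauw v g i)%N.
  by move: hci; rewrite -hz'; case: (tauw v g i) => //=; rewrite add0n ltnn.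
rewrite /cf; case: (boolP (weyl i)) => wi; first exact: natr_neq0.
have := hw i wi => hg.
have -> : tauw v g i = 1%N.
  apply/eqP; rewrite eqn_leq zp andbT; apply: leq_trans hg; by rewrite -hz' leq_addr.
by rewrite /= oner_eq0.
Qed.

Lemma Xlem (v : seq L) : all (fun l => l.1) v -> forall g : mon,
  (forall i, ~~ weyl i -> g i + count_mem (true, i) v <= 1)%N ->
  lamw v g != 0.
Proof.
elim: v => [|l v IH] /=; first by move=> *; rewrite oner_eq0.
case: l => [[] i] /andP[hb av] g hw; last by move: hb.
have hw' : forall j, ~~ weyl j -> (g j + count_mem (true, j) v <= 1)%N.
  by move=> j wj; apply: leq_trans (hw j wj); rewrite /= leq_add2l leq_addl.
have nz := IH av g hw'.
rewrite mulf_neq0 // /lam /= mulf_neq0 ?sig_neq0 //.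
have := deg_lem nz i; rewrite wdeg_count.
have -> : count_mem (false, i) v = 0%N.
  by apply/count_memPn; apply/negP => /(allP av).
move=> hz.
rewrite /xf; case: (boolP (weyl i)) => wi; first by rewrite oner_eq0.
have := hw i wi; rewrite /= eqxx add1n => hg.
rewrite subr0 -PoszD in hz; case: hz => ->.
have -> : (g i + count_mem (true, i) v = 0)%N by move: hg; rewrite addnS ltnS leqn0 => /eqP.
by rewrite /= oner_eq0.
Qed.

Lemma sum_eq (a b : 'I_N -> nat) : (forall j, a j <= b j)%N ->
  (\sum_j b j <= \sum_j a j)%N -> forall j, a j = b j.
Proof.
move=> hab hs j; apply/eqP; rewrite eqn_leq hab /= leqNgt; apply/negP => hlt.
have : (\sum_j a j < \sum_j b j)%N.
  rewrite (bigD1 j) //= [X in (_ < X)%N](bigD1 j) //=.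
  by rewrite -addSn leq_add // leq_sum.
by rewrite ltnNge hs.
Qed.

Lemma ex_min (T : eqType) (f : T -> nat) (s : seq T) t1 : t1 \in s ->
  exists2 t0, t0 \in s & forall t, t \in s -> (f t0 <= f t)%N.
Proof.
move=> t1s.
have ex : exists n, has (fun t => f t == n) s by exists (f t1); apply/hasP; exists t1.
case: (ex_minnP ex) => m /hasP[t0 t0s /eqP ft0] hmin.
exists t0 => // t ts; rewrite ft0; apply: hmin; apply/hasP; by exists t.
Qed.

Definition dsum (u : seq L) : nat := \sum_(i < N) count_mem (false, i) u.

Lemma Goodadm (u : seq L) i b : Good u -> ~~ weyl i -> (count_mem (b, i) u <= 1)%N.
Proof.
case/andP => _ au wi; case: (boolP ((b, i) \in u)) => h; last by rewrite (count_memPn h).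
by have := allP au _ h; rewrite (negPf wi).
Qed.

Definition bet (u : seq L) : mon := [ffun i => count_mem (false, i) u].
Definition alp (u : seq L) : mon := [ffun i => count_mem (true, i) u].

Lemma claimA (u u0 : seq L) : Good u -> Good u0 -> (dsum u0 <= dsum u)%N ->
  Ew u (bet u0) (alp u0) != 0 -> u = u0.
Proof.
move=> Gu Gu0 hd; rewrite /Ew mulf_eq0 negb_or => /andP[nz ht].
have ht' : tauw u (bet u0) = alp u0.
  by move: ht; case: (tauw u (bet u0) =P alp u0) => // _ /eqP [].
case/andP: (Gu) => su au.
have E := sorted_split su.
have nzd : lamw [seq l <- u | ~~ l.1] (bet u0) != 0.
  by move: nz; rewrite {1}E lamw_cat mulf_eq0 negb_or => /andP[].
have hcnt : forall j, (count_mem (false, j) u <= bet u0 j)%N.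
  move=> j; have := deg_lem nzd j; rewrite wdeg_count count_fd0 count_fd => hz.
  have h2 : (tauw [seq l <- u | ~~ l.1] (bet u0) j + count_mem (false, j) u = bet u0 j)%N.
    by apply/eqP; rewrite -eqz_nat PoszD hz; apply/eqP; ring.
  by rewrite -h2 leq_addl.
have heqd : forall j, count_mem (false, j) u = bet u0 j.
  apply: sum_eq => //; move: hd; rewrite /dsum.
  by under [X in (X <= _)%N -> _]eq_bigr => i _ do rewrite -[count_mem _ u0](ffunE (fun i => count_mem (false, i) u0)).
have heqx : forall j, count_mem (true, j) u = alp u0 j.
  move=> j; have := deg_lem nz j; rewrite wdeg_count ht' heqd => hz.
  by apply/eqP; rewrite -eqz_nat hz; apply/eqP; ring.
apply: (sorted_eq leL_tr leL_anti) => //; first by case/andP: Gu0.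
apply/allP => -[b j] _; apply/eqP; case: b.
  by rewrite heqx ffunE.
by rewrite heqd ffunE.
Qed.

Lemma claimB (u0 : seq L) : Good u0 -> Ew u0 (bet u0) (alp u0) != 0.
Proof.
move=> Gu0; case/andP: (Gu0) => su au.
have E := sorted_split su.
have nzd : lamw [seq l <- u0 | ~~ l.1] (bet u0) != 0.
  apply: Dlem; first exact: filter_all.
    by move=> i; rewrite count_fd ffunE.
  by move=> i wi; rewrite ffunE; apply: Goodadm.
have tz : tauw [seq l <- u0 | ~~ l.1] (bet u0) = [ffun => 0%N].
  apply/ffunP => j; have := deg_lem nzd j; rewrite wdeg_count count_fd0 count_fd ffunE => hz.
  rewrite ffunE; apply/eqP; rewrite -eqz_nat hz; apply/eqP; ring.
have nzx : lamw [seq l <- u0 | l.1] (tauw [seq l <- u0 | ~~ l.1] (bet u0)) != 0.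
  rewrite tz; apply: Xlem; first exact: filter_all.
  by move=> i wi; rewrite ffunE add0n count_fx; apply: Goodadm.
have nz : lamw u0 (bet u0) != 0.
  have -> : lamw u0 (bet u0) = lamw ([seq l <- u0 | l.1] ++ [seq l <- u0 | ~~ l.1]) (bet u0) by rewrite -E.
  by rewrite lamw_cat mulf_neq0.
have ht : tauw u0 (bet u0) = alp u0.
  apply/ffunP => j; have := deg_lem nz j; rewrite wdeg_count !ffunE => hz.
  by apply/eqP; rewrite -eqz_nat hz; apply/eqP; ring.
by rewrite /Ew ht eqxx nat1 mulr1.
Qed.

Lemma indep (s : seq (k * seq L)) : (forall t, t \in s -> Good t.2) ->
  (forall g h, \sum_(t <- s) t.1 * Ew t.2 g h = 0) -> \sum_(t <- s) t.1 *: word t.2 = 0.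
Proof.
have [n] := ubnP (size s); elim: n s => // n IHn s hsz Gs H.
case: (eqVneq s [::]) => [->|sn]; first by rewrite big_nil.
have [t1 t1s] : exists t1, t1 \in s by case: s sn {hsz Gs H} => // a s' _; exists a; rewrite inE eqxx.
have [t0 t0s hmin] := ex_min (fun t : k * seq L => dsum t.2) t1s.
set u0 := t0.2.
have Hz : forall t, t \in s -> t.2 != u0 -> Ew t.2 (bet u0) (alp u0) = 0.
  move=> t ts ne; apply/eqP; apply: contraR ne => nz; apply/eqP.
  by apply: claimA => //; [apply: Gs | apply: Gs | apply: hmin].
have Hc : \sum_(t <- s | t.2 == u0) t.1 = 0.
  have := H (bet u0) (alp u0); rewrite (bigID (fun t => t.2 == u0)) /=.
  rewrite [X in _ + X]big_seq_cond [X in _ + X]big1 ?addr0; last first.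
    by move=> t /andP[ts ne]; rewrite Hz // mulr0.
  rewrite (eq_bigr (fun t => t.1 * Ew u0 (bet u0) (alp u0))); last by move=> t /eqP ->.
  rewrite -mulr_suml => /eqP; rewrite mulf_eq0 (negPf (claimB (Gs t0 t0s))) orbF.
  by move/eqP.
rewrite (bigID (fun t => t.2 == u0)) /=.
rewrite (eq_bigr (fun t => t.1 *: word u0)); last by move=> t /eqP ->.
rewrite -scaler_suml Hc scale0r add0r -big_filter.
apply: IHn.
- have : (0 < count (predC (fun t : k * seq L => t.2 != u0)) s)%N.
    by rewrite -has_count; apply/hasP; exists t0 => //=; rewrite negbK.
  have := count_predC (fun t : k * seq L => t.2 != u0) s.
  rewrite size_filter; lia.
- by move=> t; rewrite mem_filter => /andP[_ ts]; apply: Gs.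
- move=> g h; rewrite big_filter.
  have := H g h; rewrite (bigID (fun t => t.2 == u0)) /=.
  rewrite (eq_bigr (fun t => t.1 * Ew u0 g h)); last by move=> t /eqP ->.
  by rewrite -mulr_suml Hc mul0r add0r.
Qed.

Lemma W_neq0 g : W g != 0.
Proof. by rewrite /W; apply/prodf_neq0 => i _; apply: natr_neq0; exact: fact_gt0. Qed.

Section Main.
Variables (f : A -> E) (fhom : is_alg_hom f).
Hypotheses (fx : forall i, f (x i) = Xop i) (fd : forall i, f (d i) = Dop i).

Lemma f0 : f 0 = 0.
Proof.
case: fhom => hl _ _; have := hl 1 0 0; rewrite !scale1r addr0 => h.
by apply: (@addrI _ (f 0)); rewrite addr0 -h.
Qed.

Lemma f_sum (G : seq L -> A) (s : seq (k * seq L)) :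
  f (\sum_(t <- s) t.1 *: G t.2) = \sum_(t <- s) t.1 *: f (G t.2).
Proof.
case: fhom => hl _ _.
elim: s => [|t s IH]; first by rewrite !big_nil f0.
by rewrite !big_cons hl IH.
Qed.

Lemma f_word w : f (word w) = cw_word Xop Dop w.
Proof.
case: fhom => _ hm h1.
elim: w => [|l w IH]; first by rewrite word_nil h1 /cw_word big_nil.
rewrite word_cons hm IH wordE_endo; congr (_ * _).
by case: l => [[] i]; rewrite /cw_letter /=.
Qed.

Lemma ev_sum (U : seq L -> E) (s : seq (k * seq L)) F m :
  (\sum_(t <- s) t.1 *: U t.2) F m = \sum_(t <- s) t.1 * U t.2 F m.
Proof.
elim: s => [|t s IH]; first by rewrite !big_nil ev0.
by rewrite !big_cons evD evZ IH.
Qed.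

Lemma act (G : seq L -> seq L) (s : seq (k * seq L)) g h :
  f (\sum_(t <- s) t.1 *: word (G t.2)) (dl g) h = \sum_(t <- s) t.1 * Ew (G t.2) g h.
Proof.
rewrite (f_sum (fun u => word (G u))) (eq_bigr (fun t => t.1 *: cw_word Xop Dop (G t.2))); last first.
  by move=> t _; rewrite f_word.
rewrite (ev_sum (fun u => cw_word Xop Dop (G u))); apply: eq_bigr => t _.
by rewrite word_act /Ew /dl eq_sym.
Qed.

Variables (st : A -> A) (hst : cw_star x d st).

Lemma st0 : st 0 = 0.
Proof.
case: hst => hl _ _ _ _; have := hl 1 0 0; rewrite !scale1r addr0 => h.
by apply: (@addrI _ (st 0)); rewrite addr0 -h.
Qed.

Lemma st1 : st 1 = 1.
Proof.
case: hst => _ hm hi _ _.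
transitivity (st 1 * st (st 1)); first by rewrite hi mulr1.
by rewrite -hm mulr1 hi.
Qed.

Lemma st_sum (G : seq L -> A) (s : seq (k * seq L)) :
  st (\sum_(t <- s) t.1 *: G t.2) = \sum_(t <- s) t.1 *: st (G t.2).
Proof.
case: hst => hl _ _ _ _.
elim: s => [|t s IH]; first by rewrite !big_nil st0.
by rewrite !big_cons hl IH.
Qed.

Lemma st_word w : st (word w) = word (star w).
Proof.
case: hst => _ hm _ hx hd.
elim: w => [|l w IH]; first by rewrite word_nil st1 /star /=.
rewrite word_cons hm IH /star /= rev_cons -cats1 word_cat; congr (_ * _).
rewrite /cw_word big_seq1; case: l => [[] i]; by rewrite /cw_letter /=.
Qed.

Lemma main_sec (g : 'I_N -> int) (a : A) : cw_homogeneous x d g a -> st a * a = 0 -> a = 0.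
Proof.
case=> s [Ea Hs] h0.
case: fhom => _ hm _.
have key : forall ga h, \sum_(t <- s) t.1 * Ew t.2 ga h = 0.
  move=> ga h.
  pose h0' : mon := [ffun j => absz ((ga j)%:Z + g j)].
  have tauE : forall t, t \in s -> lamw t.2 ga != 0 -> tauw t.2 ga = h0'.
    by move=> t ts nz; apply/ffunP => j; rewrite ffunE -(Hs t ts j) -deg_lem.
  have EwE : forall t h', t \in s -> Ew t.2 ga h' = Ew t.2 ga h0' * (h0' == h')%:R.
    move=> t h' ts; rewrite /Ew; case: (eqVneq (lamw t.2 ga) 0) => [->|nz]; first by rewrite !mul0r.
    by rewrite (tauE t ts nz) eqxx nat1 mulr1.
  set La := \sum_(t <- s) t.1 * Ew t.2 ga h0'.
  have sumE : forall h', \sum_(t <- s) t.1 * Ew t.2 ga h' = La * (h0' == h')%:R.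
    move=> h'; rewrite /La mulr_suml big_seq [RHS]big_seq; apply: eq_bigr => t ts.
    by rewrite EwE // mulrA.
  have faE : f a (dl ga) = fun m => La * dl h0' m.
    by apply: funext => m; rewrite Ea (act id) sumE /dl eq_sym.
  have fsa : forall m, f (st a) (dl h0') m = \sum_(t <- s) t.1 * Ew (star t.2) h0' m.
    by move=> m; rewrite Ea (st_sum (fun u => word u)) (eq_bigr (fun t => t.1 *: word (star t.2))) ?(act star) // => t _; rewrite st_word.
  have zero : f (st a * a) (dl ga) ga = 0 by rewrite h0 f0 ev0.
  rewrite hm evM faE linZ fsa in zero.
  have adj : (\sum_(t <- s) t.1 * Ew (star t.2) h0' ga) * W ga = La * W h0'.
    rewrite mulr_suml /La mulr_suml; apply: eq_bigr => t _.
    by rewrite -mulrA -adjW mulrA.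
  have : La * La * W h0' = 0 by rewrite -mulrA -adj mulrA zero mul0r.
  move/eqP; rewrite mulf_eq0 (negPf (W_neq0 _)) orbF mulf_eq0 orbb => /eqP LaE.
  by rewrite sumE LaE mul0r.
have [s' [Ea' Gs']] : inspan Good a.
  by rewrite Ea; apply: (@inspan_sum _ s (fun u => word u)) => t _; apply: span.
rewrite Ea'; apply: indep => // ga h.
by rewrite -(act id) -Ea' Ea (act id) key.
Qed.
End Main.

End Rep.

Unset Implicit Arguments.
Import Order.TTheory GRing.Theory Num.Theory.

Theorem mainTheorem2 (k : closedFieldType) (char0 : [pchar k] =i pred0)
  (p q : nat) (sgn : bool) (A : algType k) (x d : 'I_(p + q) -> A)
  (hA : cw_presented p q sgn A x d)
  (st : A -> A) (hst : cw_star x d st)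
  (g : 'I_(p + q) -> int) (a : A) (ha : cw_homogeneous x d g a) :
  st a * a = 0 -> a = 0.
Proof.
move=> h0.
case: hA => hrel univ.
have [[f [fhom fx fd]] _] := univ (endo k (p + q)) (@Xop k p q sgn) (@Dop k p q sgn) (@Rrel k p q sgn).
exact: (main_sec hrel char0 fhom fx fd hst ha h0).
Qed.
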